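(* Let $p$ be a prime, $\tau\in\mathbb{Z}$, $a,b$ positive integers, and $\alpha,\beta$ nonnegative integers such that $p^\beta$ exactly divides $\gcd(a,b)$ and $p^\alpha$ divides $a+b$. Then $p^{\alpha-\beta}$ divides \[ \binom{a\tau+a-1}{a}\binom{b\tau+b}{b} \] (i.e. the $p$-adic valuation of this integer is at least $\alpha-\beta$).
   Context: Binomial coefficients with negative top argument are defined by $\binom{n}{k}=(-1)^k\binom{-n+k-1}{k}$ for $n<0$, $k\geq0$. *)

(* Defs.v *)
From mathcomp Require Import all_boot all_order all_algebra.
Set Implicit Arguments. Unset Strict Implicit. Unset Printing Implicit Defensive.
Import GRing.Theory Num.Theory.
Local Open Scope ring_scope.

(* Generalized binomial coefficient binom(n, k) for n : int, k : nat.
   For n >= 0 it is the usual 'C(n, k); for n < 0 it is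
   (-1)^k * binom(-n + k - 1, k), as in the paper. *)
Definition binz (n : int) (k : nat) : int :=
  match n with
  | Posz m => ('C(m, k))%:Z
  | Negz m => (-1) ^+ k * ('C(m + k, k))%:Z   (* Negz m = -(m+1), so -n+k-1 = m+k *)
  end.

(* Main.v *)
Require Import Defs.
From mathcomp Require Import all_boot all_order all_algebra zify.
Import GRing.Theory Num.Theory.

Lemma sum_mod q u v : 0 < q -> q %| u + v ->
  u %% q + v %% q = 0 \/ u %% q + v %% q = q.
Proof.
move=> q0 h.
have h1 : q %| u %% q + v %% q by rewrite /dvdn modnDm.
have hu := ltn_pmod u q0. have hv := ltn_pmod v q0.
case/dvdnP: h1 => k hk. rewrite hk.
case: k hk => [|[|k]] hk; [left|right|]; rewrite ?mul0n ?mul1n //.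
exfalso. rewrite !mulSn in hk. lia.
Qed.

Lemma carry_arith q r y x z w : 0 < r -> r < q -> y < q -> x < q -> z < q -> w < q ->
  (r + y = 0 \/ r + y = q) -> (x + z = 0 \/ x + z = q) ->
  ((w + 1 = q /\ x = 0) \/ (w + 1 < q /\ x = w + 1)) ->
  0 < (q <= r + w) + (q <= y + z).
Proof.
move=> h1 h2 h3 h4 h5 h6 h7 h8 h9.
case: (leqP q (r + w)) => H1; case: (leqP q (y + z)) => H2 /=; lia.
Qed.

Lemma carry q a b t : 0 < q -> q %| a + b -> ~~ (q %| a) -> 0 < t ->
  0 < (q <= a %% q + (a * t - 1) %% q) + (q <= b %% q + (b * t) %% q).
Proof.
move=> q0 hab hna t0.
have ha0 : 0 < a %% q by rewrite lt0n; move: hna; rewrite /dvdn.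
have a0 : 0 < a by case: a {hab} hna ha0 => //; rewrite mod0n.
have hry := @sum_mod q a b q0 hab.
have hxz : q %| a * t + b * t by rewrite -mulnDl dvdn_mulr.
have hxz' := @sum_mod q _ _ q0 hxz.
have hw : (a * t) %% q = ((a * t - 1) %% q + 1) %% q.
  rewrite modnDml subnK //; rewrite muln_gt0 a0 t0 //.
have hwq := ltn_pmod (a * t - 1) q0.
have hr := ltn_pmod a q0. have hy := ltn_pmod b q0.
have hx := ltn_pmod (a * t) q0. have hz := ltn_pmod (b * t) q0.
apply: (@carry_arith q _ _ ((a * t) %% q)) => //.
have [hq|hq] := ltnP ((a * t - 1) %% q + 1) q.
  by right; rewrite hw modn_small.
left; have e : (a * t - 1) %% q + 1 = q by apply/eqP; rewrite eqn_leq hq andbT addn1.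
by rewrite hw e modnn.
Qed.
Lemma fact_sum_ext p j N : prime p -> j < N ->
  \sum_(1 <= k < j.+1) j %/ p ^ k = \sum_(1 <= k < N) j %/ p ^ k.
Proof.
move=> pp jN.
rewrite (@big_cat_nat _ _ _ j.+1 1 N) //=.
rewrite [X in _ = _ + X]big_nat_cond [X in _ = _ + X]big1 ?addn0 // => k /andP[/andP[jk _] _].
apply: divn_small; apply: leq_trans jk _; apply: ltnW; apply: ltn_expl.
exact: prime_gt1.
Qed.

Lemma logn_bin p m n N : prime p -> m + n < N ->
  logn p 'C(m + n, m) = \sum_(1 <= k < N) (p ^ k <= m %% p ^ k + n %% p ^ k).
Proof.
move=> pp hN.
have hf := bin_fact (leq_addr n m); rewrite addKn in hf.
have hl : logn p (m + n)`! = logn p 'C(m + n, m) + (logn p m`! + logn p n`!).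
  by rewrite -hf lognM ?muln_gt0 ?fact_gt0 ?bin_gt0 ?leq_addr // lognM ?fact_gt0.
move: hl; rewrite !logn_fact //.
rewrite (@fact_sum_ext p (m + n) N pp hN) (@fact_sum_ext p m N pp) ?(@fact_sum_ext p n N pp);
  try by apply: leq_ltn_trans hN; rewrite ?leq_addr ?leq_addl.
have pk k : 0 < p ^ k by rewrite expn_gt0 prime_gt0.
rewrite (eq_bigr (fun k => m %/ p ^ k + n %/ p ^ k + (p ^ k <= m %% p ^ k + n %% p ^ k)));
  last by move=> k _; rewrite divnD.
rewrite !big_split /=.
lia.
Qed.

Lemma core p a b t alpha beta : prime p -> 0 < a -> 0 < b -> 0 < t ->
  p ^ beta %| gcdn a b -> ~~ (p ^ beta.+1 %| gcdn a b) -> p ^ alpha %| a + b ->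
  p ^ (alpha - beta) %| 'C(a + (a * t - 1), a) * 'C(b + b * t, b).
Proof.
move=> pp a0 b0 t0 hb hnb ha.
case: (leqP alpha beta) => hab.
  by have -> : alpha - beta = 0 by apply/eqP; rewrite subn_eq0.
set N := a + (a * t - 1) + (b + b * t) + alpha.+1.
rewrite pfactor_dvdn // ?muln_gt0 ?bin_gt0 ?leq_addr // lognM ?bin_gt0 ?leq_addr //.
rewrite (@logn_bin p a (a * t - 1) N) //; last by rewrite /N; lia.
rewrite (@logn_bin p b (b * t) N) //; last by rewrite /N; lia.
rewrite -big_split /=.
apply: leq_trans (_ : \sum_(beta.+1 <= k < alpha.+1) 1 <= _).
  by rewrite sum_nat_const_nat muln1 subSS.
rewrite (@big_cat_nat _ _ _ beta.+1 1 N) //=; last by rewrite /N; lia.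
rewrite (@big_cat_nat _ _ _ alpha.+1 beta.+1 N) //=; last by rewrite /N; lia.
apply: leq_trans (leq_addl _ _); apply: leq_trans (leq_addr _ _).
rewrite big_nat_cond [X in _ <= X]big_nat_cond; apply: leq_sum => k /andP[/andP[hk1 hk2] _].
have q0 : 0 < p ^ k by rewrite expn_gt0 prime_gt0.
have hqab : p ^ k %| a + b by apply: dvdn_trans ha; rewrite dvdn_exp2l.
apply: carry => //.
apply/negP => hqa.
have hqb : p ^ k %| b by rewrite -(dvdn_addr b hqa).
apply: (negP hnb).
apply: (@dvdn_trans (p ^ k)); first by rewrite dvdn_exp2l.
by rewrite dvdn_gcd hqa hqb.
by apply: ltnW.
Qed.

Local Open Scope ring_scope.

Theorem lemma4p11 (p : nat) (tau : int) (a b alpha beta : nat) :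
  prime p -> (0 < a)%N -> (0 < b)%N ->
  (p ^ beta %| gcdn a b)%N -> ~~ (p ^ beta.+1 %| gcdn a b)%N ->
  (p ^ alpha %| a + b)%N ->
  ((p ^ (alpha - beta))%:Z %|
     binz (a%:Z * tau + a%:Z - 1) a * binz (b%:Z * tau + b%:Z) b)%Z.
Proof.
move=> pp a0 b0 hb hnb ha.
rewrite dvdzE abszM /=.
case: tau => t.
  have e1 : a%:Z * t%:Z + a%:Z - 1 = (a + a * t - 1)%N%:Z by lia.
  have e2 : b%:Z * t%:Z + b%:Z = (b + b * t)%N%:Z by lia.
  rewrite e1 e2 /=.
  case: t {e1 e2} => [|t].
    by rewrite muln0 addn0 bin_small ?mul0n ?dvdn0 //; lia.
  have e3 : (a + a * t.+1 - 1 = a + (a * t.+1 - 1))%N by lia.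
  rewrite e3; exact: core.
have e1 : a%:Z * Negz t + a%:Z - 1 = Negz (a * t) by rewrite NegzE; lia.
rewrite e1 /= abszM absz_sign mul1n.
case: t {e1} => [|t].
  have e2 : b%:Z * Negz 0 + b%:Z = 0 by rewrite NegzE; lia.
  by rewrite e2 /= (bin_small b0) muln0 dvdn0.
have e2 : b%:Z * Negz t.+1 + b%:Z = Negz (b * t.+1 - 1).
  rewrite !NegzE subn1 prednK ?muln_gt0 ?b0 //. lia.
rewrite e2 /= abszM absz_sign mul1n mulnC.
have e3 : (b * t.+1 - 1 + b = b + (b * t.+1 - 1))%N by rewrite addnC.
rewrite e3 [(a * t.+1 + a)%N]addnC.
by apply: core => //; first [by rewrite gcdnC | by rewrite addnC].
Qed.
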